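(* Let $\vartheta$ be a primitive semi-compatible random substitution with topological entropy $s$, and suppose $\mathcal P(q)\neq\varnothing$ for at least one $q\in\mathbb N$. Then \[ s=\limsup_{q\to\infty}\frac1q\log(\#\mathcal P(q)). \]
   Context: Let $\mathcal A=\{a_1,\dots,a_n\}$ be a finite alphabet. A random substitution is a map $\vartheta$ from $\mathcal A$ to finite non-empty sets of finite non-empty words, extended to words by $\vartheta(u_1\cdots u_m)=\{w_1\cdots w_m: w_k\in\vartheta(u_k)\}$ and to sets of words by unions; powers $\vartheta^m$ are compositions. $\vartheta$ is semi-compatible if for each $a$ all words in $\vartheta(a)$ have the same vector of letter counts; the substitution matrix $M_{ij}$ is the number of $a_i$ in any word of $\vartheta(a_j)$; primitive means $M$ is a primitive matrix. The language $\mathcal L$ is the set of all subwords (contiguous factors) of words in $\vartheta^m(a)$, $a\in\mathcal A$, $m\in\mathbb N$; $\mathcal L_\ell$ its words of length $\ell$; $s=\lim_{\ell\to\infty}\frac1\ell\log\#\mathcal L_\ell$. The set of periodic words of period $q$ is $\mathcal P(q)=\{u\in\mathcal L: |u|=q,\ u^N\in\mathcal L\text{ for all }N\in\mathbb N\}$, where $u^N$ is the $N$-fold concatenation of $u$. *)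

(* Defs.v *)
From Stdlib Require Import Reals ClassicalEpsilon.
From mathcomp Require Import all_boot.

Set Implicit Arguments.
Unset Strict Implicit.
Unset Printing Implicit Defensive.

Definition pb (P : Prop) : bool :=
  if excluded_middle_informative P then true else false.

Section RandSubst.
Variable A : finType.

(* A random substitution: each letter is sent to a finite set of words,
   represented by a list of words (duplicates irrelevant). *)
Definition rsubst := A -> seq (seq A).

Definition is_random_substitution (theta : rsubst) : Prop :=
  forall a : A, theta a <> [::] /\ forall w, w \in theta a -> w <> [::].

Definition in_subst (theta : rsubst) (u w : seq A) : Prop :=
  exists ws : seq (seq A),
    size ws = size u /\ all2 (fun (a : A) (v : seq A) => v \in theta a) u ws
    /\ w = flatten ws.

Fixpoint in_subst_pow (theta : rsubst) (m : nat) (u w : seq A) : Prop :=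
  match m with
  | 0 => w = u
  | m'.+1 => exists v, in_subst theta u v /\ in_subst_pow theta m' v w
  end.

Definition in_lang (theta : rsubst) (w : seq A) : Prop :=
  exists (a : A) (m : nat) (v : seq A), in_subst_pow theta m [:: a] v /\ infix w v.

Definition semi_compatible (theta : rsubst) : Prop :=
  forall (a : A) (v w : seq A), v \in theta a -> w \in theta a ->
    forall b : A, count_mem b v = count_mem b w.

(* substitution matrix M_{b a} = number of b in (any) word of theta(a) *)
Definition subst_matrix (theta : rsubst) (b a : A) : nat :=
  count_mem b (head [::] (theta a)).

Fixpoint mat_pow (M : A -> A -> nat) (k : nat) (i j : A) : nat :=
  match k with
  | 0 => nat_of_bool (i == j)
  | k'.+1 => \sum_(l : A) M i l * mat_pow M k' l j
  end.

Definition primitive_matrix (M : A -> A -> nat) : Prop :=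
  exists k : nat, 0 < k /\ forall i j : A, 0 < mat_pow M k i j.

Definition primitive_subst (theta : rsubst) : Prop :=
  primitive_matrix (subst_matrix theta).

Definition card_lang (theta : rsubst) (l : nat) : nat :=
  #|[set t : l.-tuple A | pb (in_lang theta (tval t))]|.

Definition wpow (u : seq A) (N : nat) : seq A := flatten (nseq N u).

Definition card_periodic (theta : rsubst) (q : nat) : nat :=
  #|[set t : q.-tuple A |
      pb (in_lang theta (tval t) /\ forall N : nat, in_lang theta (wpow (tval t) N))]|.

End RandSubst.

(* limsup of an extended-real sequence (None = -infinity) equals the real l *)
Definition is_limsup (u : nat -> option R) (l : R) : Prop :=
  (forall eps : R, Rlt 0 eps ->
     exists N : nat, forall n : nat, (N <= n)%coq_nat ->
       forall x : R, u n = Some x -> Rlt x (Rplus l eps)) /\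
  (forall eps : R, Rlt 0 eps ->
     forall N : nat, exists n : nat, (N <= n)%coq_nat /\
       exists x : R, u n = Some x /\ Rlt (Rminus l eps) x).

(* q |-> (1/q) log #P(q), with log 0 = -infinity *)
Definition periodic_growth (A : finType) (theta : rsubst A) (q : nat) : option R :=
  if card_periodic theta q == 0 then None
  else Some (Rdiv (ln (INR (card_periodic theta q))) (INR q)).

(* Main.v *)
Require Import Defs.
From Stdlib Require Import Reals ClassicalEpsilon Classical Lra Psatz.
From mathcomp Require Import all_boot.
From mathcomp Require Import zify.

Set Implicit Arguments.
Unset Strict Implicit.
Unset Printing Implicit Defensive.

Section Comb.
Variable A : finType.
Variable theta : rsubst A.
Hypothesis Hrs : is_random_substitution theta.
Hypothesis Hsc : semi_compatible theta.

Definition sub1 (u : seq A) : seq (seq A) :=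
  foldr (fun a acc => [seq x ++ y | x <- theta a, y <- acc]) [:: [::]] u.

Fixpoint subn (m : nat) (u : seq A) : seq (seq A) :=
  match m with
  | 0 => [:: u]
  | m'.+1 => flatten [seq subn m' v | v <- sub1 u]
  end.



Lemma sub1_consP a u w : reflect (exists x y, [/\ x \in theta a, y \in sub1 u & w = x ++ y])
  (w \in sub1 (a :: u)).
Proof.
rewrite /=; apply: (iffP allpairsP) => [[[x y] /= [Hx Hy ->]]|[x [y [Hx Hy ->]]]].
  by exists x, y.
by exists (x, y).
Qed.

Lemma sub1_nil w : (w \in sub1 [::]) = (w == [::]).
Proof. by rewrite /= inE. Qed.

Lemma in_substE u w : in_subst theta u w <-> w \in sub1 u.
Proof.
elim: u w => [|a u IH] w.
  rewrite sub1_nil; split.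
    by move=> [[|z ws] [//= _ [_ ->]]].
  by move/eqP->; exists [::].
split.
  move=> [[|z ws] [//= [Hs] [/andP [Hz Hall] ->]]].
  apply/sub1_consP; exists z, (flatten ws); split=> //.
  by apply/IH; exists ws.
move/sub1_consP=> [x [y [Hx /IH [ws [Hs [Hall ->]]] ->]]].
by exists (x :: ws); rewrite /= Hs Hx Hall.
Qed.

Lemma sub1_cat u u' w : (exists w1 w2, [/\ w1 \in sub1 u, w2 \in sub1 u' & w = w1 ++ w2])
   <-> w \in sub1 (u ++ u').
Proof.
elim: u w => [|a u IH] w /=.
  split; first by move=> [w1 [w2 [/= ]]]; rewrite inE => /eqP -> H ->.
  by move=> H; exists [::], w; rewrite inE.
split.
  move=> [w1 [w2 [/sub1_consP [x [y [Hx Hy ->]]] H2 ->]]].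
  apply/sub1_consP; exists x, (y ++ w2); rewrite catA; split=> //.
  by apply/IH; exists y, w2.
move/sub1_consP=> [x [y [Hx /IH [w1 [w2 [H1 H2 ->]]] ->]]].
exists (x ++ w1), w2; rewrite catA; split=> //.
by apply/sub1_consP; exists x, w1.
Qed.

Lemma subnS m u w : w \in subn m.+1 u <-> exists v, v \in sub1 u /\ w \in subn m v.
Proof.
rewrite /=; split.
  by move/flatten_mapP=> [v Hv Hw]; exists v.
by move=> [v [Hv Hw]]; apply/flatten_mapP; exists v.
Qed.

Lemma in_subst_powE m u w : in_subst_pow theta m u w <-> w \in subn m u.
Proof.
elim: m u w => [|m IH] u w /=.
  by rewrite inE; split => [->|/eqP].
rewrite -/(subn m.+1 u) subnS; split.
  by move=> [v [/in_substE Hv /IH Hw]]; exists v.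
by move=> [v [Hv Hw]]; exists v; split; [apply/in_substE|apply/IH].
Qed.

Lemma subn_cat m u u' w : (exists w1 w2, [/\ w1 \in subn m u, w2 \in subn m u' & w = w1 ++ w2])
   <-> w \in subn m (u ++ u').
Proof.
elim: m u u' w => [|m IH] u u' w.
  rewrite /= !inE; split; first by move=> [w1 [w2 []]]; rewrite !inE => /eqP-> /eqP-> ->.
  by move/eqP->; exists u, u'; rewrite !inE.
rewrite subnS; split.
  move=> [w1 [w2 [/subnS [v1 [Hv1 Hw1]] /subnS [v2 [Hv2 Hw2]] ->]]].
  exists (v1 ++ v2); split; first by apply/sub1_cat; exists v1, v2.
  by apply/IH; exists w1, w2.
move=> [v [/sub1_cat [v1 [v2 [H1 H2 ->]]] /IH [w1 [w2 [Hw1 Hw2 ->]]]]].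
by exists w1, w2; split => //; apply/subnS; [exists v1|exists v2].
Qed.

Lemma subn_add p q u w : w \in subn (p + q) u <-> exists v, v \in subn p u /\ w \in subn q v.
Proof.
elim: p u w => [|p IH] u w.
  rewrite add0n; split; first by move=> H; exists u; rewrite /= inE.
  by move=> [v [/=]]; rewrite inE => /eqP ->.
rewrite addSn !subnS; split.
  move=> [v [Hv /IH [v' [Hv' Hw]]]]; exists v'; split=> //.
  by apply/subnS; exists v.
move=> [v [/subnS [v' [Hv' Hv]] Hw]]; exists v'; split=> //.
by apply/IH; exists v.
Qed.

Lemma sub1_nonempty u : exists w, w \in sub1 u.
Proof.
elim: u => [|a u [y Hy]]; first by exists [::].
case: (Hrs a) => Hne _; case E: (theta a) Hne => [//|x l] _.
by exists (x ++ y); apply/sub1_consP; exists x, y; rewrite E inE eqxx.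
Qed.

Lemma subn_nonempty m u : exists w, w \in subn m u.
Proof.
elim: m u => [|m IH] u; first by exists u; rewrite inE.
have [v Hv] := sub1_nonempty u; have [w Hw] := IH v.
by exists w; apply/subnS; exists v.
Qed.


Lemma sum_seq_count (f : A -> nat) (u : seq A) :
  \sum_(a <- u) f a = \sum_(c : A) count_mem c u * f c.
Proof.
elim: u => [|a u IH]; first by rewrite big_nil big1 // => c _; rewrite mul0n.
rewrite big_cons IH.
rewrite [in RHS](eq_bigr (fun c => (a == c) * f c + count_mem c u * f c)); last by move=> c _; rewrite /= mulnDl.
rewrite big_split /=; congr (_ + _).
rewrite (bigD1 a) //= eqxx mul1n big1 ?addn0 // => c /negbTE Hc.
by rewrite eq_sym Hc mul0n.
Qed.

Lemma size_count (w : seq A) : size w = \sum_(b : A) count_mem b w.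
Proof.
have := sum_seq_count (fun _ => 1) w.
rewrite sum1_size => ->; by under eq_bigr => c _ do rewrite muln1.
Qed.

Notation sm := (subst_matrix theta).

Lemma theta_count a x b : x \in theta a -> count_mem b x = sm b a.
Proof.
move=> Hx; rewrite /subst_matrix; case: (Hrs a) => Hne _.
case E: (theta a) Hne => [//|y l] _ /=.
by apply: (Hsc Hx); rewrite E inE eqxx.
Qed.

Lemma sub1_count u w b : w \in sub1 u -> count_mem b w = \sum_(a <- u) sm b a.
Proof.
elim: u w => [|a u IH] w; first by rewrite sub1_nil big_nil => /eqP ->.
move/sub1_consP=> [x [y [Hx Hy ->]]].
by rewrite count_cat big_cons (theta_count b Hx) (IH _ Hy).
Qed.

Lemma subn1 v w : (w \in subn 1 v) = (w \in sub1 v).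
Proof.
apply/idP/idP.
  by move/subnS=> [v' [Hv']]; rewrite /= inE => /eqP ->.
by move=> H; apply/subnS; exists w; rewrite /= inE.
Qed.

Lemma subn_count m u w b : w \in subn m u ->
  count_mem b w = \sum_(c : A) mat_pow sm m b c * count_mem c u.
Proof.
elim: m w b => [|m IH] w b.
  rewrite /= inE => /eqP ->.
  rewrite (bigD1 b) //= eqxx mul1n big1 ?addn0 // => c /negbTE Hc.
  by rewrite eq_sym Hc.
rewrite -addn1 => /subn_add [v [Hv]]; rewrite subn1 => Hw.
rewrite (sub1_count b Hw) sum_seq_count.
under eq_bigr => a _ do rewrite (IH _ _ Hv).
under eq_bigr => a _ do rewrite big_distrl /=.
rewrite exchange_big /= addn1; apply: eq_bigr => c _.
rewrite [mat_pow _ m.+1 _ _]/= [RHS]big_distrl /=; apply: eq_bigr => a _.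
by rewrite mulnC mulnA.
Qed.

Definition Lm m (a : A) := \sum_(b : A) mat_pow sm m b a.

Definition lenw m (u : seq A) := \sum_(a <- u) Lm m a.

Lemma subn_size m u w : w \in subn m u -> size w = lenw m u.
Proof.
move=> Hw; rewrite size_count /lenw [RHS]sum_seq_count.
under eq_bigr => b _ do rewrite (subn_count b Hw).
rewrite exchange_big /=; apply: eq_bigr => c _.
by rewrite /Lm [RHS]big_distrr /=; apply: eq_bigr => b _; rewrite mulnC.
Qed.

Lemma lenw_cat m u u' : lenw m (u ++ u') = lenw m u + lenw m u'.
Proof. by rewrite /lenw big_cat. Qed.

Lemma lenw1 m a : lenw m [:: a] = Lm m a.
Proof. by rewrite /lenw big_seq1. Qed.

Lemma subn_size1 m a w : w \in subn m [:: a] -> size w = Lm m a.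
Proof. by move/subn_size; rewrite lenw1. Qed.

Lemma sub1_size_pos u w : w \in sub1 u -> size u <= size w.
Proof.
elim: u w => [|a u IH] w //.
move/sub1_consP=> [x [y [Hx Hy ->]]].
case: (Hrs a) => _ /(_ x Hx); case: x Hx => // z x _ _.
by rewrite /= ltnS size_cat (leq_trans (IH _ Hy)) // leq_addl.
Qed.

Lemma subn_size_pos m u w : w \in subn m u -> size u <= size w.
Proof.
elim: m u w => [|m IH] u w; first by rewrite /= inE => /eqP ->.
by move/subnS=> [v [Hv Hw]]; apply: leq_trans (sub1_size_pos Hv) (IH _ _ Hw).
Qed.

Lemma Lm_pos m a : 0 < Lm m a.
Proof.
have [w Hw] := subn_nonempty m [:: a].
by rewrite -(subn_size1 Hw) (subn_size_pos Hw).
Qed.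


Definition cnt m u := size (undup (subn m u)).

Lemma subn_nil m w : (w \in subn m [::]) = (w == [::]).
Proof.
apply/idP/eqP.
  by move/subn_size; rewrite /lenw big_nil; case: w.
move->; have [w' Hw] := subn_nonempty m [::].
by have := subn_size Hw; rewrite /lenw big_nil; case: w' Hw.
Qed.

Lemma cnt_nil m : cnt m [::] = 1.
Proof.
rewrite /cnt; have -> : size (undup (subn m [::])) = size [:: [::] : seq A] => //.
apply/perm_size/uniq_perm; rewrite ?undup_uniq // => w.
by rewrite mem_undup subn_nil inE.
Qed.

Lemma cnt_cat m u u' : cnt m (u ++ u') = cnt m u * cnt m u'.
Proof.
rewrite /cnt -(size_allpairs cat).
apply/perm_size/uniq_perm; rewrite ?undup_uniq //.
  apply: allpairs_uniq; rewrite ?undup_uniq //.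
  move=> [x y] [x' y'] /allpairsP [[x1 y1] /= [Hx1 Hy1 [-> ->]]].
  move=> /allpairsP [[x2 y2] /= [Hx2 Hy2 [-> ->]]] /= /eqP.
  rewrite mem_undup in Hx1; rewrite mem_undup in Hx2.
  rewrite eqseq_cat; last by rewrite (subn_size Hx1) (subn_size Hx2).
  by case/andP => /eqP -> /eqP ->.
move=> w; rewrite mem_undup; apply/idP/idP.
  move/subn_cat=> [w1 [w2 [H1 H2 ->]]].
  by apply/allpairsP; exists (w1, w2); rewrite !mem_undup.
move/allpairsP=> [[w1 w2] /= [H1 H2 ->]]; rewrite !mem_undup in H1 H2.
by apply/subn_cat; exists w1, w2.
Qed.

Lemma cnt_prod m u : cnt m u = \prod_(a <- u) cnt m [:: a].
Proof.
elim: u => [|a u IH]; first by rewrite big_nil cnt_nil.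
by rewrite -cat1s cnt_cat big_cons IH.
Qed.

Lemma cnt_pos m u : 0 < cnt m u.
Proof.
have [w Hw] := subn_nonempty m u.
by rewrite /cnt lt0n size_eq0; apply/eqP => H; move: Hw; rewrite -mem_undup H.
Qed.

Lemma Lm_add p q b r : r \in subn p [:: b] -> Lm (p + q) b = lenw q r.
Proof.
move=> Hr; have [w Hw] := subn_nonempty q r.
rewrite -(subn_size Hw); apply/esym/subn_size1/subn_add.
by exists r.
Qed.

Lemma lenw_mem m x r : x \in r -> Lm m x <= lenw m r.
Proof. by move=> Hx; rewrite /lenw (big_rem x Hx) /= leq_addr. Qed.

Lemma lenw_lb m X r : (forall b, X <= Lm m b) -> size r * X <= lenw m r.
Proof.
move=> H; elim: r => [|a r IH]; first by rewrite mul0n.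
by rewrite /lenw big_cons -/(lenw m r) mulSn leq_add.
Qed.

Lemma lenw_ub m Y r : (forall b, Lm m b <= Y) -> lenw m r <= size r * Y.
Proof.
move=> H; elim: r => [|a r IH]; first by rewrite /lenw big_nil.
by rewrite /lenw big_cons -/(lenw m r) mulSn leq_add.
Qed.

Lemma Lm_mono m X : (forall b, X <= Lm m b) -> forall j c, X <= Lm (j + m) c.
Proof.
move=> H j c; have [r Hr] := subn_nonempty j [:: c].
rewrite (Lm_add _ Hr); have := subn_size_pos Hr.
case: r Hr => // a r _ _; exact: leq_trans (H a) (lenw_mem _ (mem_head _ _)).
Qed.

Variable k : nat.
Hypothesis Hk0 : 0 < k.
Hypothesis Hk : forall i j, 0 < mat_pow sm k i j.

Lemma row_pos b : exists l, 0 < sm b l.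
Proof.
have := Hk b b; case: (pickP (fun l => 0 < sm b l)) => [l Hl|H]; first by exists l.
case: k Hk0 => // k' _ /=.
rewrite big1 // => l _; have := H l; rewrite lt0n => /negbFE/eqP ->.
by rewrite mul0n.
Qed.

Lemma mat_pow_pos i b c : k <= i -> 0 < mat_pow sm i b c.
Proof.
elim: i b c => [|i IH] b c; first by rewrite leqNgt Hk0.
rewrite leq_eqVlt => /orP [/eqP <-|]; first exact: Hk.
rewrite ltnS => Hi /=.
have [l Hl] := row_pos b.
rewrite (bigD1 l) //= ltn_addr // muln_gt0 Hl IH //.
Qed.

Lemma letter_in i c b w : k <= i -> w \in subn i [:: c] -> b \in w.
Proof.
move=> Hi Hw; rewrite -has_pred1 has_count (subn_count b Hw).
rewrite (bigD1 c) //= eqxx addn0 muln1 ltn_addr //.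
exact: mat_pow_pos.
Qed.

Definition K1 := \sum_(c : A) Lm k c.

Lemma Lm_k_le b : Lm k b <= K1.
Proof. by rewrite /K1 (bigD1 b) //= leq_addr. Qed.

Lemma Lm_compare m b c : k <= m -> Lm m b <= K1 * Lm m c.
Proof.
move=> Hm; rewrite -(subnKC Hm).
have [r Hr] := subn_nonempty k [:: b]; have [r' Hr'] := subn_nonempty k [:: c].
rewrite (Lm_add _ Hr) (Lm_add _ Hr').
have H : forall x, Lm (m - k) x <= lenw (m - k) r'.
  by move=> x; apply: lenw_mem; apply: letter_in Hr'.
apply: leq_trans (lenw_ub _ H) _.
by rewrite leq_mul2r (subn_size1 Hr) Lm_k_le orbT.
Qed.

Lemma Lm_double m X b0 : 2 <= Lm 1 b0 -> (forall b, X <= Lm m b) ->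
  forall c, 2 * X <= Lm (k + (1 + m)) c.
Proof.
move=> H2 HX c; have [r Hr] := subn_nonempty k [:: c].
rewrite (Lm_add _ Hr); apply: leq_trans (lenw_mem _ (letter_in b0 (leqnn k) Hr)).
have [r0 Hr0] := subn_nonempty 1 [:: b0].
rewrite (Lm_add _ Hr0); apply: leq_trans (lenw_lb _ HX).
by rewrite leq_mul2r (subn_size1 Hr0) H2 orbT.
Qed.

Lemma Lm_grow b0 : 2 <= Lm 1 b0 -> forall X, exists m0, forall m c, m0 <= m -> X <= Lm m c.
Proof.
move=> H2.
have Hi : forall i c, 2 ^ i <= Lm (i * (k + 1)) c.
  elim=> [|i IH] c; first by rewrite mul0n Lm_pos.
  rewrite mulSn expnS.
  have -> : k + 1 + i * (k + 1) = k + (1 + i * (k + 1)) by rewrite addnA.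
  exact: Lm_double H2 IH c.
move=> X; exists (X * (k + 1)) => m c Hm.
rewrite -(subnK Hm); apply: leq_trans (Lm_mono _ _ _); last first.
  by move=> b; apply: Hi.
by apply: ltnW; apply: ltn_expl.
Qed.


Lemma in_langE w : in_lang theta w <->
  exists a m v, v \in subn m [:: a] /\ infix w v.
Proof.
split.
  by move=> [a [m [v [/in_subst_powE Hv Hi]]]]; exists a, m, v.
by move=> [a [m [v [Hv Hi]]]]; exists a, m, v; split => //; apply/in_subst_powE.
Qed.

Lemma subn_cat3 m u1 u2 u3 x1 x2 x3 : x1 \in subn m u1 -> x2 \in subn m u2 ->
  x3 \in subn m u3 -> x1 ++ x2 ++ x3 \in subn m (u1 ++ u2 ++ u3).
Proof.
move=> H1 H2 H3; apply/subn_cat; exists x1, (x2 ++ x3); split => //.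
by apply/subn_cat; exists x2, x3.
Qed.

Lemma lang_subn m y z : in_lang theta y -> z \in subn m y -> in_lang theta z.
Proof.
move=> /in_langE [a [m' [v [Hv /infixP [s1 [s2 Hvs]]]]]] Hz.
have [z1 H1] := subn_nonempty m s1; have [z2 H2] := subn_nonempty m s2.
apply/in_langE; exists a, (m' + m), (z1 ++ z ++ z2); split; last exact: infix_infix.
by apply/subn_add; exists v; split => //; rewrite Hvs; exact: subn_cat3 H1 Hz H2.
Qed.

Lemma wpow_subn m v z N : z \in subn m v -> wpow z N \in subn m (wpow v N).
Proof.
move=> Hz; elim: N => [|N IH]; first by rewrite /wpow /= subn_nil.
by rewrite /wpow /=; apply/subn_cat; exists z, (wpow z N).
Qed.

Lemma periodic_subn m v z : (forall N, in_lang theta (wpow v N)) ->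
  z \in subn m v -> in_lang theta z /\ forall N, in_lang theta (wpow z N).
Proof.
move=> Hv Hz.
have HN : forall N, in_lang theta (wpow z N).
  by move=> N; apply: lang_subn (Hv N) (wpow_subn N Hz).
by split => //; have := HN 1; rewrite /wpow /= cats0.
Qed.

Lemma lang_deep w : in_lang theta w -> forall m, exists u x, x \in subn m u /\ infix w x.
Proof.
move=> /in_langE [a [m' [v [Hv Hi]]]] m.
have [r Hr] := subn_nonempty (k + m) [:: a].
have Ha : a \in r by apply: letter_in Hr; rewrite leq_addr.
case/splitPr: r / Ha Hr => r1 r2 Hr.
have [z1 H1] := subn_nonempty m' r1; have [z2 H2] := subn_nonempty m' r2.
have Hx : z1 ++ v ++ z2 \in subn (k + m + m') [:: a].
  by apply/subn_add; exists (r1 ++ a :: r2); split => //; rewrite -cat1s; exact: subn_cat3 H1 Hv H2.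
have : z1 ++ v ++ z2 \in subn (k + m' + m) [:: a] by rewrite addnAC.
move/subn_add=> [u [_ Hu]]; exists u, (z1 ++ v ++ z2); split => //.
by apply: infix_catl; apply: infix_catr.
Qed.

Lemma exists_long v : 0 < size v -> (forall N, in_lang theta (wpow v N)) ->
  exists b0, 2 <= Lm 1 b0.
Proof.
move=> Hsz Hv; case: (pickP (fun b => 2 <= Lm 1 b)) => [b Hb|H]; first by exists b.
exfalso.
have H1 : forall b, Lm 1 b = 1.
  by move=> b; have := H b; have := Lm_pos 1 b; case: (Lm 1 b) => [|[|]].
have Hall : forall m b, Lm m b = 1.
  elim=> [|m IH] b; first by have := Lm_pos 0 b; rewrite /Lm (bigD1 b) //= eqxx big1 // => c /negbTE; rewrite eq_sym => ->.
  have [r Hr] := subn_nonempty 1 [:: b].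
  rewrite -add1n (Lm_add _ Hr); have := subn_size1 Hr; rewrite H1.
  by case: r Hr => [|c [|]] //= _ _; rewrite lenw1 IH.
move: (Hv 2) => /in_langE [a [m [x [Hx Hi]]]].
have := size_infix Hi; rewrite (subn_size1 Hx) Hall /wpow /= cats0 size_cat.
by case: (size v) Hsz => // n _; rewrite addSn ltnS addnS.
Qed.


Lemma subn_consP m a u x : x \in subn m (a :: u) ->
  exists z x'', [/\ z \in subn m [:: a], x'' \in subn m u & x = z ++ x''].
Proof. by rewrite -cat1s => /subn_cat. Qed.

Lemma trimR m Lmax : (forall b, Lm m b <= Lmax) ->
  forall u x t s2, x \in subn m u -> x = t ++ s2 -> t != [::] ->
  exists y x' s2', [/\ x' \in subn m y, x' = t ++ s2' & size s2' < Lmax].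
Proof.
move=> HL; elim=> [|a u IH] x t s2.
  by rewrite subn_nil => /eqP ->; case: t.
move=> /subn_consP [z [x'' [Hz Hx'' ->]]] Heq Htn.
have Hzl : size z <= Lmax by rewrite (subn_size1 Hz).
have Htpos : 0 < size t by rewrite lt0n size_eq0.
case: (leqP (size t) (size z)) => Hle.
  exists [:: a], z, (take (size z - size t) s2); split => //.
    have := congr1 (take (size z)) Heq.
    by rewrite take_size_cat // take_cat ltnNge Hle /=.
  rewrite size_take_min; lia.
have Ht : t = z ++ drop (size z) t.
  have := congr1 (take (size z)) Heq.
  rewrite take_size_cat // take_cat Hle => Hz'.
  by rewrite {1}Hz' cat_take_drop.
have Hx2 : x'' = drop (size z) t ++ s2.
  have := congr1 (drop (size z)) Heq.
  by rewrite drop_size_cat // drop_cat Hle.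
have Ht2 : drop (size z) t != [::].
  by rewrite -size_eq0 size_drop; apply/eqP; lia.
have [y [x' [s2' [Hx' Hx'e Hs]]]] := IH _ _ _ Hx'' Hx2 Ht2.
exists (a :: y), (z ++ x'), s2'; split => //.
  by rewrite -cat1s; apply/subn_cat; exists z, x'.
by rewrite Hx'e catA -Ht.
Qed.

Lemma trim m Lmax : (forall b, Lm m b <= Lmax) ->
  forall u x s1 w s2, x \in subn m u -> x = s1 ++ w ++ s2 -> w != [::] ->
  exists y x' s1' s2', [/\ x' \in subn m y, x' = s1' ++ w ++ s2', size s1' < Lmax
     & size s2' < Lmax].
Proof.
move=> HL; elim=> [|a u IH] x s1 w s2.
  by rewrite subn_nil => /eqP ->; case: s1 => //; case: w.
move=> Hx; move: (Hx) => /subn_consP [z [x'' [Hz Hx'' Hxe]]] Heq Hw.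
have Hzl : size z <= Lmax by rewrite (subn_size1 Hz).
case: (ltnP (size s1) (size z)) => Hlt.
  have Htn : s1 ++ w != [::] by apply: contra Hw; rewrite -!size_eq0 size_cat addn_eq0 => /andP [].
  have [y [x' [s2' [Hx' Hxe' Hs2]]]] := trimR HL Hx (etrans Heq (catA _ _ _)) Htn.
  exists y, x', s1, s2'; split => //; first by rewrite Hxe' catA.
  exact: leq_trans Hlt Hzl.
have Hx2 : x'' = drop (size z) s1 ++ w ++ s2.
  have := congr1 (drop (size z)) (etrans (esym Hxe) Heq).
  rewrite drop_size_cat // drop_cat.
  case: ltnP => H //.
  have -> : size z = size s1 by apply/eqP; rewrite eqn_leq Hlt H.
  by rewrite subnn drop0 drop_size.
exact: IH Hx'' Hx2 Hw.
Qed.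


Fixpoint words (j : nat) : seq (seq A) :=
  match j with
  | 0 => [:: [::]]
  | j'.+1 => [::] :: [seq a :: y | a <- enum A, y <- words j']
  end.

Lemma mem_words j y : size y <= j -> y \in words j.
Proof.
elim: j y => [|j IH] [|a y] //= Hy.
rewrite inE; apply/orP; right; apply/allpairsP; exists (a, y) => /=.
by rewrite mem_enum IH.
Qed.

Lemma size_words j : size (words j) <= (#|A|.+1) ^ j.
Proof.
elim: j => [|j IH] //=.
rewrite size_allpairs -cardE expnS mulSn -addn1 addnC.
by apply: leq_add; [rewrite expn_gt0 | rewrite leq_mul2l IH orbT].
Qed.

Lemma size_flatten_const (T U : Type) (f : T -> seq U) (s : seq T) c :
  (forall x, size (f x) = c) -> size (flatten [seq f x | x <- s]) = size s * c.
Proof.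
by move=> H; elim: s => [|x s IH] //=; rewrite size_cat IH H mulSn.
Qed.

Section Count.
Variables (m l a Lmax J : nat).
Hypothesis Hl : 0 < l.
Hypothesis Ha : forall b, a <= Lm m b.
Hypothesis HL : forall b, Lm m b <= Lmax.
Hypothesis HJ : l + 2 * Lmax < J.+1 * a.

Definition Ys := [seq y <- words J | lenw m y <= l + 2 * Lmax].
Definition Fy (y : seq A) :=
  flatten [seq [seq take l (drop o x) | o <- iota 0 Lmax] | x <- undup (subn m y)].
Definition Big := flatten [seq Fy y | y <- Ys].

Lemma size_Fy y : size (Fy y) = cnt m y * Lmax.
Proof. by rewrite /Fy (@size_flatten_const _ _ _ _ Lmax) // => x; rewrite size_map size_iota. Qed.

Lemma size_Big : size Big = sumn [seq cnt m y * Lmax | y <- Ys].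
Proof.
rewrite /Big size_flatten /shape -map_comp; congr sumn; apply: eq_map => y /=.
exact: size_Fy.
Qed.

Lemma lang_in_Big w : size w = l -> in_lang theta w -> w \in Big.
Proof.
move=> Hw Hlang.
have [u [x [Hx /infixP [s1 [s2 Hxe]]]]] := lang_deep Hlang m.
have Hw0 : w != [::] by rewrite -size_eq0 Hw -lt0n.
have [y [x' [s1' [s2' [Hx' Hxe' Hs1 Hs2]]]]] := trim HL Hx Hxe Hw0.
have Hlen : lenw m y = size s1' + l + size s2'.
  by rewrite -(subn_size Hx') Hxe' !size_cat Hw addnA.
have Hy : y \in Ys.
  rewrite mem_filter Hlen; apply/andP; split; first lia.
  apply: mem_words.
  have := lenw_lb y Ha; rewrite Hlen => H.
  have : size y * a < J.+1 * a by lia.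
  by rewrite ltn_mul2r => /andP [_]; rewrite ltnS.
apply/flatten_mapP; exists y => //.
apply/flatten_mapP; exists x'; first by rewrite mem_undup.
apply/mapP; exists (size s1'); first by rewrite mem_iota.
by rewrite Hxe' drop_size_cat // take_size_cat.
Qed.

End Count.

Lemma pbP (P : Prop) : pb P -> P.
Proof. by rewrite /pb; case: excluded_middle_informative. Qed.

Lemma pbT (P : Prop) : P -> pb P.
Proof. by rewrite /pb; case: excluded_middle_informative. Qed.

Lemma card_lang_Big m l a Lmax J : 0 < l -> (forall b, a <= Lm m b) ->
  (forall b, Lm m b <= Lmax) -> l + 2 * Lmax < J.+1 * a ->
  card_lang theta l <= sumn [seq cnt m y * Lmax | y <- Ys m l Lmax J].
Proof.
move=> Hl Ha HL HJ; rewrite -size_Big /card_lang cardE.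
rewrite -(size_map val).
apply: uniq_leq_size; first by rewrite (map_inj_uniq val_inj) enum_uniq.
move=> w /mapP [t]; rewrite mem_enum inE => /pbP Ht ->.
by apply: (lang_in_Big Hl Ha HL HJ); rewrite ?size_tuple.
Qed.


Section RealB.
Local Open Scope R_scope.

Lemma arith (d s c n a K N0 : R) : 0 < d -> d < s -> 1 <= a -> 1 <= K -> 0 <= c -> 0 <= N0 ->
  4 * c < d * a -> 3 * K + 6 * K / d + 12 * s * K / d + N0 < n ->
  (s - d/4) * (n * a) < (n + 2 * K) * c + K * a + (s - d) * (n * a + 2 * (K * a)) -> False.
Proof.
move=> Hd Hs Ha HK Hc HN0 H2 H3 H1.
have H3' : 3 * K * d + 6 * K + 12 * s * K < n * d.
  have : (3 * K + 6 * K / d + 12 * s * K / d) * d < n * d.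
    apply: Rmult_lt_compat_r => //; lra.
  have -> : (3 * K + 6 * K / d + 12 * s * K / d) * d = 3 * K * d + 6 * K + 12 * s * K by field; lra.
  lra.
have Hc2 : (n + 2 * K) * c <= (n + 2 * K) * (d * a / 4).
  apply: Rmult_le_compat_l; [nra | lra].
have H4 : (d / 2 * n) * a < (d * K / 2 + K + 2 * s * K) * a by nra.
have H5 : d / 2 * n < d * K / 2 + K + 2 * s * K.
  by apply: (Rmult_lt_reg_r a) => //; lra.
nra.
Qed.

Lemma powE a b : Nat.pow a b = expn a b.
Proof. elim: b => [|b IH] //=; by rewrite expnS IH. Qed.

Lemma INR_muln (x y : nat) : INR (x * y)%N = INR x * INR y.
Proof. exact: mult_INR. Qed.

Lemma INR_addn (x y : nat) : INR (x + y)%N = INR x + INR y.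
Proof. exact: plus_INR. Qed.

Lemma INR_leq (x y : nat) : (x <= y)%N -> INR x <= INR y.
Proof. by move/leP; apply: le_INR. Qed.

Lemma exp_le x y : x <= y -> exp x <= exp y.
Proof.
case/Rle_lt_or_eq_dec => [H|->]; last exact: Rle_refl.
exact: Rlt_le (exp_increasing _ _ H).
Qed.

Lemma cnt_exp_bound beta m :
  (forall b, INR (cnt m [:: b]) <= exp (beta * INR (Lm m b))) ->
  forall y, INR (cnt m y) <= exp (beta * INR (lenw m y)).
Proof.
move=> H; elim=> [|a y IH].
  by rewrite cnt_nil /lenw big_nil /= Rmult_0_r exp_0; lra.
rewrite -cat1s cnt_cat lenw_cat lenw1 INR_muln INR_addn Rmult_plus_distr_l exp_plus.
apply: Rmult_le_compat => //; exact: pos_INR.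
Qed.

Lemma sumn_bound (f : seq A -> nat) (s0 : seq (seq A)) B :
  (forall y, y \in s0 -> INR (f y) <= B) -> INR (sumn [seq f y | y <- s0]) <= INR (size s0) * B.
Proof.
elim: s0 => [|y s0 IH] H; first by rewrite /= Rmult_0_l; lra.
rewrite map_cons [sumn _]/= [size _]/= INR_addn S_INR.
have H1 := H y (mem_head _ _).
have H2 : INR (sumn [seq f y0 | y0 <- s0]) <= INR (size s0) * B.
  by apply: IH => z Hz; apply: H; rewrite inE Hz orbT.
lra.
Qed.

Lemma card_bound m l a Lmax J beta : (0 < l)%N -> (forall b, a <= Lm m b)%N ->
  (forall b, Lm m b <= Lmax)%N -> (l + 2 * Lmax < J.+1 * a)%N -> 0 <= beta ->
  (forall b, INR (cnt m [:: b]) <= exp (beta * INR (Lm m b))) ->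
  INR (card_lang theta l) <=
    INR (#|A|.+1) ^ J * (INR Lmax * exp (beta * INR (l + 2 * Lmax)%N)).
Proof.
move=> Hl Ha HL HJ Hb H.
apply: Rle_trans (INR_leq (card_lang_Big Hl Ha HL HJ)) _.
apply: Rle_trans (sumn_bound (B := INR Lmax * exp (beta * INR (l + 2 * Lmax)%N)) _) _.
  move=> y; rewrite mem_filter => /andP [Hy _].
  rewrite INR_muln Rmult_comm; apply: Rmult_le_compat_l; first exact: pos_INR.
  apply: Rle_trans (cnt_exp_bound H y) _.
  apply: exp_le; apply: Rmult_le_compat_l => //; exact: INR_leq.
apply: Rmult_le_compat_r.
  apply: Rmult_le_pos; [exact: pos_INR | exact: Rlt_le (exp_pos _)].
rewrite -pow_INR powE; apply: INR_leq.
apply: (leq_trans _ (size_words J)); rewrite size_filter; exact: count_size.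
Qed.


Lemma ln0 : ln 0 = 0.
Proof. by rewrite /ln; case: Rlt_dec => [H|//]; case: (Rlt_irrefl _ H). Qed.

Lemma ln_ge0 x : 1 <= x -> 0 <= ln x.
Proof.
case/Rle_lt_or_eq_dec => [H|<-]; last by rewrite ln_1; lra.
rewrite -ln_1; apply: Rlt_le; apply: ln_increasing => //; lra.
Qed.

Lemma ln_le x y : 0 < x -> x <= y -> ln x <= ln y.
Proof.
move=> Hx; case/Rle_lt_or_eq_dec => [H|<-]; last exact: Rle_refl.
by apply: Rlt_le; apply: ln_increasing.
Qed.

Lemma ln_le_x x : 0 < x -> ln x <= x - 1.
Proof. by move=> Hx; have := exp_ineq1_le (ln x); rewrite exp_ln //; lra. Qed.

Variable s : R.
Hypothesis Hs : Un_cv (fun l : nat => Rdiv (ln (INR (card_lang theta l.+1))) (INR l.+1)) s.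
Variable b0 : A.
Hypothesis Hb0 : (2 <= Lm 1 b0)%N.

Lemma K1_pos : (0 < K1)%N.
Proof. exact: leq_trans (Lm_pos k b0) (Lm_k_le b0). Qed.

Lemma good_letter d : 0 < d -> d < s -> exists m1, forall m, (m1 <= m)%N ->
  exists b, exp ((s - d) * INR (Lm m b)) < INR (cnt m [:: b]).
Proof.
move=> Hd Hds.
pose c := ln (INR #|A|.+1).
have Hc : 0 <= c by rewrite /c; apply: ln_ge0; rewrite S_INR; have := pos_INR #|A|; lra.
have [a0 Ha0] := INR_archimed 1 (4 * c / d) Rlt_0_1.
rewrite Rmult_1_r in Ha0.
have [m0 Hm0] := Lm_grow Hb0 a0.
exists (maxn k m0) => m; rewrite geq_max => /andP [Hkm Hm0m].
case: (arg_minnP (fun b => Lm m b) (erefl (predT b0))) => bm _ Hmin.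
pose a := Lm m bm.
have Ha : forall b, (a <= Lm m b)%N by move=> b; exact: Hmin.
have Haa0 : (a0 <= a)%N by exact: Hm0.
have Ha1 : (0 < a)%N by exact: Lm_pos.
pose Lmax := (K1 * a)%N.
have HL : forall b, (Lm m b <= Lmax)%N by move=> b; exact: Lm_compare.
case: (classic (exists b, exp ((s - d) * INR (Lm m b)) < INR (cnt m [:: b]))) => // Hno.
exfalso.
have Hle : forall b, INR (cnt m [:: b]) <= exp ((s - d) * INR (Lm m b)).
  by move=> b; apply: Rnot_lt_le => H; apply: Hno; exists b.
have Hd4 : d / 4 > 0 by lra.
have [N0 HN0] := Hs Hd4.
pose R0 := 3 * INR K1 + 6 * INR K1 / d + 12 * s * INR K1 / d + INR N0.
have [n Hn] := INR_archimed 1 R0 Rlt_0_1.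
rewrite Rmult_1_r in Hn.
have HN0n : (N0 < n)%N.
  apply/ltP; apply: INR_lt; rewrite /R0 in Hn.
  have := pos_INR K1; have H6 : 0 <= 6 * INR K1 / d.
    apply: Rmult_le_pos; [have := pos_INR K1; lra | apply: Rlt_le; exact: Rinv_0_lt_compat].
  have H12 : 0 <= 12 * s * INR K1 / d.
    apply: Rmult_le_pos; [apply: Rmult_le_pos; [lra|exact: pos_INR] | apply: Rlt_le; exact: Rinv_0_lt_compat].
  lra.
pose l := (n * a)%N.
have Hl : (0 < l)%N by rewrite muln_gt0 Ha1 andbT; apply: leq_ltn_trans HN0n.
pose J := (n + 2 * K1)%N.
have HJ : (l + 2 * Lmax < J.+1 * a)%N by rewrite /l /Lmax /J; nia.
have Hcard := card_bound Hl Ha HL HJ (Rlt_le _ _ (Rlt_Rminus _ _ Hds)) Hle.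
have HlN : (N0 <= l.-1)%N.
  rewrite -ltnS (prednK Hl); apply: leq_trans HN0n _.
  by rewrite /l -{1}(muln1 n) leq_mul2l Ha1 orbT.
have HN := HN0 l.-1 (elimT leP HlN).
rewrite (prednK Hl) /R_dist in HN.
case: (Rabs_def2 _ _ HN) => _ {}HN.
have HLpos : 0 < INR l by apply: lt_0_INR; apply/ltP.
have HlnL : (s - d / 4) * INR l < ln (INR (card_lang theta l)).
  have := Rmult_lt_compat_r (INR l) _ _ HLpos (ltac:(lra) : s - d / 4 < ln (INR (card_lang theta l)) / INR l).
  by rewrite /Rdiv Rmult_assoc Rinv_l ?Rmult_1_r //; lra.
have Hcpos : 0 < INR (card_lang theta l).
  case: (Rle_lt_or_eq_dec _ _ (pos_INR (card_lang theta l))) => // H0.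
  rewrite -H0 ln0 in HlnL; have : 0 < (s - d / 4) * INR l by apply: Rmult_lt_0_compat => //; lra.
  lra.
have HNpos : 0 < INR #|A|.+1 by apply: lt_0_INR; apply/ltP.
have HLmpos : 0 < INR Lmax by apply: lt_0_INR; apply/ltP; rewrite /Lmax muln_gt0 K1_pos Ha1.
have Hln := ln_le Hcpos Hcard.
have HP : 0 < INR #|A|.+1 ^ J by exact: pow_lt.
have HE := exp_pos ((s - d) * INR (l + 2 * Lmax)).
rewrite (ln_mult _ _ HP (Rmult_lt_0_compat _ _ HLmpos HE)) (ln_mult _ _ HLmpos HE) in Hln.
rewrite ln_pow // ln_exp -/c in Hln.
have HlnLm := ln_le_x HLmpos.
have Ha0a : INR a0 <= INR a by exact: INR_leq.
have H4c : 4 * c < d * INR a.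
  have : 4 * c / d * d < INR a * d by apply: Rmult_lt_compat_r => //; lra.
  by rewrite /Rdiv Rmult_assoc Rinv_l ?Rmult_1_r; lra.
have Ha1R : 1 <= INR a by have := INR_leq Ha1.
have HK1R : 1 <= INR K1 by have := INR_leq K1_pos.
apply: (arith Hd Hds Ha1R HK1R Hc (pos_INR N0) H4c Hn).
move: HlnL Hln HlnLm.
rewrite /J /Lmax /l !INR_addn !INR_muln /=.
move=> H1 H2 H3; lra.
Qed.


Fixpoint Rsum (f : A -> R) (r : seq A) : R :=
  match r with [::] => 0 | x :: r' => f x + Rsum f r' end.

Lemma Rsum_cat f r1 r2 : Rsum f (r1 ++ r2) = Rsum f r1 + Rsum f r2.
Proof. by elim: r1 => [|x r1 IH] /=; [lra | rewrite IH; lra]. Qed.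

Lemma Rsum_le f g r : (forall x, f x <= g x) -> Rsum f r <= Rsum g r.
Proof. by move=> H; elim: r => [|x r IH] /=; [lra | have := H x; lra]. Qed.

Lemma Rsum_lin (f g : A -> R) (al be : R) r :
  Rsum (fun x => al * f x + be * g x) r = al * Rsum f r + be * Rsum g r.
Proof. by elim: r => [|x r IH] /=; [ring | rewrite IH; ring]. Qed.

Definition lnc m x := ln (INR (cnt m [:: x])).
Definition LR m x := INR (Lm m x).

Lemma INR_lenw m r : INR (lenw m r) = Rsum (LR m) r.
Proof.
elim: r => [|x r IH]; first by rewrite /lenw big_nil.
by rewrite -cat1s lenw_cat lenw1 INR_addn IH.
Qed.

Lemma cnt_R_pos m r : 0 < INR (cnt m r).
Proof. by apply: lt_0_INR; apply/ltP; exact: cnt_pos. Qed.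

Lemma ln_cnt m r : ln (INR (cnt m r)) = Rsum (lnc m) r.
Proof.
elim: r => [|x r IH]; first by rewrite cnt_nil /= ln_1.
by rewrite -cat1s cnt_cat INR_muln (ln_mult _ _ (cnt_R_pos _ _) (cnt_R_pos _ _)) IH.
Qed.

Lemma lnc_ge0 m x : 0 <= lnc m x.
Proof. apply: ln_ge0; have := INR_leq (cnt_pos m [:: x]); rewrite /=; lra. Qed.

Lemma cnt_sub j m c r : r \in subn j [:: c] -> (cnt m r <= cnt (j + m) [:: c])%N.
Proof.
move=> Hr; apply: uniq_leq_size; first exact: undup_uniq.
move=> z; rewrite !mem_undup => Hz; apply/subn_add; by exists r.
Qed.

Definition Bound m E := forall b, s * LR m b - lnc m b <= E * LR m b.

Lemma deficit_split j m c r : r \in subn j [:: c] ->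
  s * LR (j + m) c - lnc (j + m) c <= Rsum (fun x => s * LR m x - lnc m x) r.
Proof.
move=> Hr.
have H1 : LR (j + m) c = Rsum (LR m) r by rewrite /LR (Lm_add _ Hr) INR_lenw.
have H2 : Rsum (lnc m) r <= lnc (j + m) c.
  rewrite -ln_cnt; apply: ln_le; first exact: cnt_R_pos.
  exact: INR_leq (cnt_sub _ Hr).
have -> : Rsum (fun x => s * LR m x - lnc m x) r = s * Rsum (LR m) r + (-1) * Rsum (lnc m) r.
  rewrite -Rsum_lin; elim: r {Hr H1 H2} => [|x r IH] //=; rewrite IH; ring.
rewrite H1; lra.
Qed.

Lemma Bound_mono m E : Bound m E -> forall j, Bound (j + m) E.
Proof.
move=> H j c; have [r Hr] := subn_nonempty j [:: c].
apply: Rle_trans (deficit_split m Hr) _.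
have -> : E * LR (j + m) c = Rsum (fun x => E * LR m x) r.
  rewrite /LR (Lm_add _ Hr) INR_lenw; elim: r {Hr} => [|x r IH] /=; [ring | rewrite -IH /LR; ring].
exact: Rsum_le.
Qed.

Definition theta0 := / (INR K1 * INR K1).

Lemma mix_step m E d : (k <= m)%N -> Bound m E -> d <= E ->
  (exists b, exp ((s - d) * INR (Lm m b)) < INR (cnt m [:: b])) ->
  Bound (k + m) (E - theta0 * (E - d)).
Proof.
move=> Hkm HB HdE [bs Hbs] c.
have Hgood : s * LR m bs - lnc m bs < d * LR m bs.
  have : (s - d) * LR m bs < lnc m bs.
    rewrite /lnc -(ln_exp ((s - d) * LR m bs)); apply: ln_increasing => //; exact: exp_pos.
  rewrite /LR; lra.
have [r Hr] := subn_nonempty k [:: c].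
have Hin : bs \in r by apply: letter_in Hr.
case/splitPr: r / Hin Hr => r1 r2 Hr.
apply: Rle_trans (deficit_split m Hr) _.
rewrite -cat1s !Rsum_cat /= Rplus_0_r.
have E1 := Rsum_le r1 (fun x => HB x); have E2 := Rsum_le r2 (fun x => HB x).
have HLtot : LR (k + m) c = Rsum (LR m) r1 + LR m bs + Rsum (LR m) r2.
  by rewrite /LR (Lm_add _ Hr) INR_lenw -cat1s !Rsum_cat /= /LR; ring.
have Hr1 : Rsum (fun x => E * LR m x) r1 = E * Rsum (LR m) r1.
  by elim: (r1) => [|x r' IH] /=; [ring | rewrite IH; ring].
have Hr2 : Rsum (fun x => E * LR m x) r2 = E * Rsum (LR m) r2.
  by elim: (r2) => [|x r' IH] /=; [ring | rewrite IH; ring].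
have Hcmp : (Lm (k + m) c <= K1 * (K1 * Lm m bs))%N.
  rewrite (Lm_add _ Hr); apply: leq_trans (lenw_ub _ (fun x => Lm_compare x bs Hkm)) _.
  by rewrite leq_mul2r (subn_size1 Hr) Lm_k_le orbT.
have HK1R : 1 <= INR K1 by have := INR_leq K1_pos.
have Hcmp' : theta0 * LR (k + m) c <= LR m bs.
  have := INR_leq Hcmp; rewrite !INR_muln -/(LR (k + m) c) -/(LR m bs) => H.
  rewrite /theta0; apply: (Rmult_le_reg_l (INR K1 * INR K1)); first nra.
  rewrite -Rmult_assoc Rinv_r; last nra.
  lra.
have HLpos : 0 <= LR (k + m) c by exact: pos_INR.
have : (E - d) * (theta0 * LR (k + m) c) <= (E - d) * LR m bs.
  by apply: Rmult_le_compat_l => //; lra.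
nra.
Qed.


Lemma Bound_weaken m E E' : Bound m E -> E <= E' -> Bound m E'.
Proof.
move=> H HE b; apply: Rle_trans (H b) _; apply: Rmult_le_compat_r => //; exact: pos_INR.
Qed.

Lemma eventually_bound d : 0 < d -> d < s -> exists ms, Bound ms (2 * d).
Proof.
move=> Hd Hds.
have [m1 Hm1] := good_letter Hd Hds.
pose m0 := maxn k m1.
have HB0 : Bound m0 s.
  by move=> b; have := lnc_ge0 m0 b; lra.
have HK1R : 1 <= INR K1 by have := INR_leq K1_pos.
have Hth : 0 < theta0 <= 1.
  rewrite /theta0; split; first by apply: Rinv_0_lt_compat; nra.
  rewrite -Rinv_1; apply: Rinv_le_contravar; nra.
have Hit : forall j, Bound (m0 + j * k) (d + (1 - theta0) ^ j * (s - d)).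
  elim=> [|j IH]; first by rewrite mul0n addn0 /=; apply: Bound_weaken HB0 _; lra.
  have Hpow : 0 <= (1 - theta0) ^ j by apply: pow_le; lra.
  have Hkm : (k <= m0 + j * k)%N by rewrite (leq_trans (leq_maxl k m1)) // leq_addr.
  have Hm1m : (m1 <= m0 + j * k)%N by rewrite (leq_trans (leq_maxr k m1)) // leq_addr.
  have := mix_step Hkm IH (ltac:(nra) : d <= d + (1 - theta0) ^ j * (s - d)) (Hm1 _ Hm1m).
  rewrite mulSn addnCA => H; apply: Bound_weaken H _.
  rewrite /=; nra.
have Hab : Rabs (1 - theta0) < 1 by rewrite Rabs_right; lra.
have Hdsd : 0 < d / (s - d) by apply: Rdiv_lt_0_compat; lra.
have [J HJ] := pow_lt_1_zero (1 - theta0) Hab (d / (s - d)) Hdsd.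
have HJJ := HJ J (Nat.le_refl J).
rewrite Rabs_right in HJJ; last by apply: Rle_ge; apply: pow_le; lra.
exists (m0 + J * k)%N; apply: Bound_weaken (Hit J) _.
have : (1 - theta0) ^ J * (s - d) < d / (s - d) * (s - d) by apply: Rmult_lt_compat_r => //; lra.
rewrite /Rdiv Rmult_assoc Rinv_l; lra.
Qed.

End RealB.

Section Final.
Local Open Scope R_scope.
Variable s : R.
Hypothesis Hs : Un_cv (fun l : nat => Rdiv (ln (INR (card_lang theta l.+1))) (INR l.+1)) s.
Variable v : seq A.
Hypothesis Hv0 : (0 < size v)%N.
Hypothesis Hvp : forall N, in_lang theta (wpow v N).

Lemma card_periodic_ge m : (cnt m v <= card_periodic theta (lenw m v))%N.
Proof.
pose Q := lenw m v.
pose L := pmap (insub : seq A -> option (Q.-tuple A)) (undup (subn m v)).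
have -> : cnt m v = size L.
  rewrite /L size_pmap_sub /cnt -(count_predT (undup (subn m v))).
  apply: eq_in_count => z; rewrite mem_undup => /subn_size ->; by rewrite eqxx.
rewrite /card_periodic cardE; apply: uniq_leq_size.
  by apply: pmap_sub_uniq; exact: undup_uniq.
move=> t; rewrite mem_pmap_sub mem_undup => Ht.
rewrite mem_enum inE; apply: pbT; exact: periodic_subn Hvp Ht.
Qed.

Lemma lower_bound eps : eps > 0 -> forall N : nat, exists n : nat, (N <= n)%coq_nat /\
  exists x : R, periodic_growth theta n = Some x /\ s - eps < x.
Proof.
move=> He N.
have [b0 Hb0] := exists_long Hv0 Hvp.
have [m0 Hm0] := Lm_grow Hb0 N.+1.
have Hhead : forall m, (m0 <= m)%N -> (N < lenw m v)%N.
  move=> m Hm; case: v Hv0 => // a r _.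
  exact: leq_trans (Hm0 m a Hm) (lenw_mem m (mem_head a r)).
have Hgen : forall m, (m0 <= m)%N -> forall lo, lo * INR (lenw m v) <= ln (INR (cnt m v)) ->
    s - eps < lo -> exists n : nat, (N <= n)%coq_nat /\
    exists x : R, periodic_growth theta n = Some x /\ s - eps < x.
  move=> m Hm lo Hlo Hlt.
  pose Q := lenw m v.
  have HQ := Hhead m Hm.
  have HP := card_periodic_ge m.
  have HPpos : (0 < card_periodic theta Q)%N by exact: leq_trans (cnt_pos m v) HP.
  exists Q; split; first by apply/leP; apply: ltnW.
  exists (ln (INR (card_periodic theta Q)) / INR Q); split.
    by rewrite /periodic_growth; case: eqP => // H; rewrite H in HPpos.
  have HQR : 0 < INR Q by apply: lt_0_INR; apply/ltP; apply: leq_ltn_trans HQ.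
  have Hln : ln (INR (cnt m v)) <= ln (INR (card_periodic theta Q)).
    by apply: ln_le; [exact: cnt_R_pos | exact: INR_leq].
  have : lo * INR Q / INR Q <= ln (INR (card_periodic theta Q)) / INR Q.
    apply: Rmult_le_compat_r; first by apply: Rlt_le; apply: Rinv_0_lt_compat.
    exact: Rle_trans Hlo Hln.
  rewrite /Rdiv Rmult_assoc Rinv_r ?Rmult_1_r; lra.
case: (Rlt_le_dec s eps) => Hse.
  apply: (Hgen m0 (leqnn m0) 0); last lra.
  rewrite Rmult_0_l ln_cnt; elim: (v) => [|x r IH] /=; first lra.
  have := lnc_ge0 m0 x; lra.
have Hd : 0 < eps / 4 by lra.
have [ms Hms] := eventually_bound Hs Hb0 Hd (ltac:(lra) : eps / 4 < s).
have HB := Bound_mono Hms m0.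
apply: (Hgen (m0 + ms)%N (leq_addr _ _) (s - 2 * (eps / 4))); last lra.
rewrite ln_cnt INR_lenw.
have -> : (s - 2 * (eps / 4)) * Rsum (LR (m0 + ms)) v =
   Rsum (fun x => (s - 2 * (eps / 4)) * LR (m0 + ms) x + 0 * LR (m0 + ms) x) v.
  by rewrite Rsum_lin; ring.
apply: Rsum_le => x; have := HB x; lra.
Qed.

End Final.

End Comb.

Lemma card_periodic_le (A : finType) (theta : rsubst A) q :
  (card_periodic theta q <= card_lang theta q)%N.
Proof.
apply: subset_leq_card; apply/subsetP => t; rewrite !inE => /pbP [H _].
exact: pbT.
Qed.

Section Upper.
Local Open Scope R_scope.
Lemma upper_bound (A : finType) (theta : rsubst A) (s : R) :
  Un_cv (fun l : nat => Rdiv (ln (INR (card_lang theta l.+1))) (INR l.+1)) s ->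
  forall eps : R, 0 < eps ->
     exists N : nat, forall n : nat, (N <= n)%coq_nat ->
       forall x : R, periodic_growth theta n = Some x -> x < s + eps.
Proof.
move=> Hs eps He; have [N0 HN0] := Hs eps He.
exists N0.+1 => n Hn x.
have Hn' : (N0 < n)%N by apply/ltP.
rewrite /periodic_growth; case: eqP => // HP [<-].
case: n Hn Hn' HP => // n' _ Hn' HP.
have Hn2 : (N0 <= n')%N by rewrite -ltnS.
have := HN0 n' (elimT leP Hn2); rewrite /R_dist => /Rabs_def2 [H1 _].
have HPpos : (0 < card_periodic theta n'.+1)%N by rewrite lt0n; apply/eqP.
have Hln : ln (INR (card_periodic theta n'.+1)) <= ln (INR (card_lang theta n'.+1)).
  apply: ln_le; first by apply: lt_0_INR; apply/ltP.
  exact: INR_leq (card_periodic_le _ _).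
have Hnpos : 0 < INR n'.+1 by apply: lt_0_INR; apply/ltP.
have : ln (INR (card_periodic theta n'.+1)) / INR n'.+1 <= ln (INR (card_lang theta n'.+1)) / INR n'.+1.
  apply: Rmult_le_compat_r => //; apply: Rlt_le; exact: Rinv_0_lt_compat.
lra.
Qed.
End Upper.

Theorem mainTheorem15 (A : finType) (theta : rsubst A) (s : R) :
  is_random_substitution theta ->
  primitive_subst theta ->
  semi_compatible theta ->
  (* s is the topological entropy: lim_l (1/l) log #L_l *)
  Un_cv (fun l : nat => Rdiv (ln (INR (card_lang theta l.+1))) (INR l.+1)) s ->
  (exists q : nat, (0 < q)%N /\ (0 < card_periodic theta q)%N) ->
  is_limsup (periodic_growth theta) s.
Proof.
move=> Hrs [k [Hk0 Hk]] Hsc Hs [q [Hq Hpq]].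
split; first exact: upper_bound.
have [t Ht] := card_gt0P Hpq.
rewrite inE in Ht; have [_ Hvp] := pbP Ht.
have Hv0 : (0 < size (val t))%N by rewrite size_tuple.
move=> eps He N.
exact: (lower_bound Hrs Hsc Hk0 Hk Hs Hv0 Hvp He N).
Qed.
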